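(* Let a liquidity provider have a concave, increasing utility $U_P$ over terminal wealth, initial reserves $x_0$ of numeraire and $y_0$ of a yield token which pays a random amount $Y$ at maturity (expectations taken under her belief distribution for $Y$). Define $$p^S(\Delta)=\sup\{p\ge 0:\ \mathbb{E}[U_P(x_0+y_0Y)]\le \mathbb{E}[U_P(x_0+y_0Y+\Delta(Y-p))]\},$$ $$p^B(\Delta)=\inf\{p\ge 0:\ \mathbb{E}[U_P(x_0+y_0Y)]\le \mathbb{E}[U_P(x_0+y_0Y+\Delta(p-Y))]\},$$ $$\psi_S(x_0,y_0)=\{(x,y):\ y=y_0+\Delta,\ x=x_0-\Delta p^S(\Delta),\ \Delta\ge 0\},$$ $$\psi_B(x_0,y_0)=\{(x,y):\ y=y_0-\Delta,\ x=x_0+\Delta p^B(\Delta),\ \Delta\ge 0\}.$$ Then the curve $\psi(x_0,y_0,U_P,Y)=\psi_S\cup\psi_B$ is the optimally efficient bonding curve for the liquidity provider: for every point $(x,y)\in\psi$, $\mathbb{E}[U_P(x+yY)]=\mathbb{E}[U_P(x_0+y_0Y)]$.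
   Context: A bonding curve constrains the reserves $(x,y)$ of an automated market maker (numeraire and yield token) reachable by trades. It is called optimally efficient for the liquidity provider if the liquidity provider's expected utility of terminal wealth $x+yY$ does not change when a trader moves the reserves along the curve. *)

(* Defs.v *)
From HB Require Import structures.
From mathcomp Require Import all_boot all_order all_algebra.
From mathcomp Require Import all_classical all_reals all_analysis.
Set Implicit Arguments. Unset Strict Implicit. Unset Printing Implicit Defensive.
Import Order.TTheory GRing.Theory Num.Theory.
Local Open Scope classical_set_scope.
Local Open Scope ring_scope.

Section AMM.
Context {R : realType} {d : measure_display} {T : measurableType d}.
Variable (P : probability T R).

Definition concave_fun (U : R -> R) : Prop :=
  forall x y t : R, 0 <= t <= 1 ->
    t * U x + (1 - t) * U y <= U (t * x + (1 - t) * y).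

Definition EU (U : R -> R) (Y : T -> R) (x y : R) : \bar R :=
  'E_P[fun w => U (x + y * Y w)].

Definition pS (U : R -> R) (Y : T -> R) (x0 y0 D : R) : R :=
  sup [set p : R | 0 <= p /\
        (EU U Y x0 y0 <= 'E_P[fun w => U (x0 + y0 * Y w + D * (Y w - p))%R])%E].

Definition pB (U : R -> R) (Y : T -> R) (x0 y0 D : R) : R :=
  inf [set p : R | 0 <= p /\
        (EU U Y x0 y0 <= 'E_P[fun w => U (x0 + y0 * Y w + D * (p - Y w))%R])%E].

Definition psiS (U : R -> R) (Y : T -> R) (x0 y0 : R) : set (R * R) :=
  [set xy | exists D : R, 0 <= D /\ xy = (x0 - D * pS U Y x0 y0 D, y0 + D)].

Definition psiB (U : R -> R) (Y : T -> R) (x0 y0 : R) : set (R * R) :=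
  [set xy | exists D : R, 0 <= D /\ xy = (x0 + D * pB U Y x0 y0 D, y0 - D)].

Definition psi (U : R -> R) (Y : T -> R) (x0 y0 : R) : set (R * R) :=
  psiS U Y x0 y0 `|` psiB U Y x0 y0.

End AMM.

(* Main.v *)
Require Import Defs.
From HB Require Import structures.
From mathcomp Require Import all_boot all_order all_algebra.
From mathcomp Require Import all_classical all_reals all_analysis.
From mathcomp Require Import ring lra.
From mathcomp Require Import measurable_realfun.
Import Order.TTheory GRing.Theory Num.Theory.
Local Open Scope classical_set_scope.
Local Open Scope ring_scope.

Section Pos.
Context (R : realType) (d : measure_display) (T : measurableType d)
  (P : probability T R).

Lemma pos_integral (f : T -> R) : P.-integrable setT (EFin \o f) ->
  (forall w, 0 < f w) -> 0 < Rintegral P setT f.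
Proof.
move=> intf fpos.
have [mf _] := integrableP _ _ _ intf.
have ge0 : (0 <= \int[P]_(x in setT) (EFin \o f) x)%E.
  by apply: integral_ge0 => x _; rewrite lee_fin ltW.
have fin := integrable_fin_num measurableT intf.
rewrite /Rintegral lt_neqAle fine_ge0 // andbT.
apply/negP => /eqP H0.
have H1 : (\int[P]_(x in setT) (EFin \o f) x = 0)%E.
  by rewrite -(fineK fin) -H0.
have : (\int[P]_(x in setT) `|(EFin \o f) x| = 0)%E.
  by rewrite -H1; apply: eq_integral => x _ /=; rewrite ger0_norm // ltW.
move/(ae_eq_integral_abs P measurableT mf) => [N [mN PN0 sub]].
have : P setT = 0%E.
  apply/eqP; rewrite -measure_le0 -PN0; apply: le_measure; rewrite ?inE //.
  move=> x _; apply: sub => /= H; have := H I; rewrite /= => -[] /eqP.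
  by rewrite gt_eqF.
by rewrite probability_setT => /eqP; rewrite onee_eq0.
Qed.
End Pos.
Section Conc.
Context {R : realType}.
Implicit Types (phi : R -> R).

Lemma conc_inv phi a b h : concave_fun phi -> 0 <= h ->
  phi a + h * phi b <= (1 + h) * phi ((a + h * b) / (1 + h)).
Proof.
move=> Hc h0.
have h1 : 0 < 1 + h by lra.
have t01 : 0 <= (1 + h)^-1 <= 1.
  apply/andP; split; first by rewrite invr_ge0 ltW.
  by rewrite invf_le1 //; lra.
have := Hc a b _ t01.
have -> : (1 + h)^-1 * a + (1 - (1 + h)^-1) * b = (a + h * b) / (1 + h).
  by field; rewrite gt_eqF.
move=> H.
have := ler_wpM2l (ltW h1) H.
have -> : (1 + h) * ((1 + h)^-1 * phi a + (1 - (1 + h)^-1) * phi b)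
   = phi a + h * phi b by field; rewrite gt_eqF.
done.
Qed.

Lemma conc_lip phi x h : concave_fun phi -> `|h| <= 1 ->
  `|phi (x + h) - phi x| <= `|h| * (`|phi (x + 1) - phi x| + `|phi x - phi (x - 1)|).
Proof.
move=> Hc hle.
set A := phi (x + 1) - phi x; set B := phi x - phi (x - 1).
have hA : - `|A| <= A <= `|A| by rewrite -ler_norml.
have hB : - `|B| <= B <= `|B| by rewrite -ler_norml.
have [h0|h0] := leP 0 h.
  rewrite ger0_norm // in hle *.
  have L : h * A <= phi (x + h) - phi x.
    have /andP[_ ?] : 0 <= h <= 1 by apply/andP.
    have := Hc (x + 1) x h (introT andP (conj h0 hle)).
    rewrite (_ : h * (x + 1) + (1 - h) * x = x + h); last by ring.
    rewrite /A; nra.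
  have U : phi (x + h) - phi x <= h * B.
    have := conc_inv phi (x + h) (x - 1) h Hc h0.
    rewrite (_ : (x + h + h * (x - 1)) / (1 + h) = x); last first.
      by field; rewrite gt_eqF //; lra.
    rewrite /B; nra.
  have e1 : 0 <= h * (`|A| - A) by apply: mulr_ge0 => //; lra.
  have e2 : 0 <= h * (`|B| - B) by apply: mulr_ge0 => //; lra.
  have e3 : 0 <= h * (`|A| + A) by apply: mulr_ge0 => //; lra.
  have e4 : 0 <= h * (`|B| + B) by apply: mulr_ge0 => //; lra.
  rewrite ler_norml; apply/andP; split; nra.
have [k k0 hk] : exists2 k, 0 <= k & h = -k by exists (-h); [lra | rewrite opprK].
rewrite hk normrN ger0_norm // in hle *.
have L : - k * B <= phi (x + - k) - phi x.
  have := Hc (x - 1) x k (introT andP (conj k0 hle)).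
  rewrite (_ : k * (x - 1) + (1 - k) * x = x + - k); last by ring.
  rewrite /B; nra.
have U : phi (x + - k) - phi x <= - k * A.
  have := conc_inv phi (x + - k) (x + 1) k Hc k0.
  rewrite (_ : (x + - k + k * (x + 1)) / (1 + k) = x); last first.
    by field; rewrite gt_eqF //; lra.
  rewrite /A; nra.
have e1 : 0 <= k * (`|A| - A) by apply: mulr_ge0 => //; lra.
have e2 : 0 <= k * (`|B| - B) by apply: mulr_ge0 => //; lra.
have e3 : 0 <= k * (`|A| + A) by apply: mulr_ge0 => //; lra.
have e4 : 0 <= k * (`|B| + B) by apply: mulr_ge0 => //; lra.
rewrite ler_norml; apply/andP; split; nra.
Qed.

Lemma conc_far phi x t : concave_fun phi -> 1 <= t ->
  phi (x - t) <= phi x - t * (phi x - phi (x - 1)).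
Proof.
move=> Hc t1.
have t0 : 0 < t by lra.
have s01 : 0 <= t^-1 <= 1.
  apply/andP; split; first by rewrite invr_ge0 ltW.
  by rewrite invf_le1.
have := Hc (x - t) x _ s01.
rewrite (_ : t^-1 * (x - t) + (1 - t^-1) * x = x - 1); last first.
  by field; rewrite gt_eqF.
move=> H.
have := ler_wpM2l (ltW t0) H.
rewrite (_ : t * (t^-1 * phi (x - t) + (1 - t^-1) * phi x)
   = phi (x - t) + (t - 1) * phi x); last by field; rewrite gt_eqF.
move=> H2; nra.
Qed.
End Conc.
Section SupInf.
Context {R : realType}.
Definition contat (phi : R -> R) (s : R) := forall e : R, 0 < e ->
  exists2 del : R, 0 < del & forall q, `|q - s| < del -> `|phi q - phi s| < e.

Lemma sup_eq (phi : R -> R) (c M : R) :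
  let S := [set p | 0 <= p /\ c <= phi p] in
  S 0 -> ubound S M -> contat phi (sup S) -> phi (sup S) = c.
Proof.
move=> S S0 SM cont.
have hs : has_sup S by split; [exists 0 | exists M].
have ub := sup_upper_bound hs.
have s0 : 0 <= sup S by exact: ub.
apply/eqP; rewrite eq_le; apply/andP; split.
  rewrite leNgt; apply/negP => lt.
  have [del del0 Hd] := cont (phi (sup S) - c) ltac:(lra).
  have d2 : 0 < del / 2 by rewrite divr_gt0.
  set q := sup S + del / 2.
  have Sq : S q.
    split; first by rewrite /q; lra.
    have : `|q - sup S| < del.
      rewrite /q addrAC subrr add0r gtr0_norm //; lra.
    move/Hd; rewrite ltr_norml => /andP[h1 _]; lra.
  have := ub _ Sq; rewrite /q; lra.
rewrite leNgt; apply/negP => lt.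
have [del del0 Hd] := cont (c - phi (sup S)) ltac:(lra).
have [p [p0 cp] lp] := sup_adherent del0 hs.
have ps := ub _ (conj p0 cp).
have : `|p - sup S| < del by rewrite ler0_norm; lra.
move/Hd; rewrite ltr_norml => /andP[_ h2]; lra.
Qed.

Lemma inf_eq (phi : R -> R) (c p1 : R) :
  let S := [set p | 0 <= p /\ c <= phi p] in
  S p1 -> phi 0 <= c -> contat phi (inf S) -> phi (inf S) = c.
Proof.
move=> S Sp1 phi0 cont.
have lb0 : lbound S 0 by move=> x [].
have hi : has_inf S by split; [exists p1 | exists 0].
have lb := ge_inf hi.2.
have i0 : 0 <= inf S by apply: lb_le_inf; [exists p1|].
apply/eqP; rewrite eq_le; apply/andP; split; last first.
  rewrite leNgt; apply/negP => lt.
  have [del del0 Hd] := cont (c - phi (inf S)) ltac:(lra).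
  have [p [p0 cp] lp] := inf_adherent del0 hi.
  have ps := lb _ (conj p0 cp).
  have : `|p - inf S| < del by rewrite ger0_norm; lra.
  move/Hd; rewrite ltr_norml => /andP[_ h2]; lra.
rewrite leNgt; apply/negP => lt.
have [ieq|ipos] := eqVneq (inf S) 0.
  by move: lt; rewrite ieq; lra.
have ip : 0 < inf S by rewrite lt_neqAle eq_sym ipos.
have [del del0 Hd] := cont (phi (inf S) - c) ltac:(lra).
set q := inf S - Num.min (del / 2) (inf S / 2).
have m0 : 0 < Num.min (del / 2) (inf S / 2) by rewrite lt_min !divr_gt0.
have m1 : Num.min (del / 2) (inf S / 2) <= del / 2 by rewrite ge_min lexx.
have m2 : Num.min (del / 2) (inf S / 2) <= inf S / 2 by rewrite ge_min lexx orbT.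
have Sq : S q.
  split; first by rewrite /q; lra.
  have : `|q - inf S| < del by rewrite /q ler0_norm; lra.
  move/Hd; rewrite ltr_norml => /andP[h1 _]; lra.
have := lb _ Sq; rewrite /q; lra.
Qed.
End SupInf.
Section Main.
Context (R : realType) (d : measure_display) (T : measurableType d)
  (P : probability T R) (U : R -> R) (Y : T -> R).
Hypothesis Uc : concave_fun U.
Hypothesis Uinc : {homo U : a b / a < b}.
Hypothesis Y0 : forall w, 0 <= Y w.
Hypothesis Hint : forall x y : R, P.-integrable setT (fun w => (U (x + y * Y w))%:E).

Definition intR (f : T -> R) := P.-integrable setT (EFin \o f).

Lemma intB f g : intR f -> intR g -> intR (fun w => f w - g w).
Proof.
move=> hf hg; apply: eq_integrable (integrableB measurableT hf hg) => //.
Qed.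

Lemma intZ k f : intR f -> intR (fun w => k * f w).
Proof.
move=> hf; apply: eq_integrable (integrableZl measurableT k hf) => //.
Qed.

Lemma intU x y : intR (fun w => U (x + y * Y w)).
Proof. exact: Hint. Qed.

Lemma Ule a b : a <= b -> U a <= U b.
Proof. by rewrite le_eqVlt => /predU1P[->//|/Uinc/ltW]. Qed.

Definition G x y := Rintegral P setT (fun w => U (x + y * Y w)).

Lemma EU_G x y : EU P U Y x y = (G x y)%:E.
Proof.
rewrite /EU /G /Rintegral unlock fineK //.
exact: integrable_fin_num (Hint x y).
Qed.

Lemma G_le x y x' y' : (forall w, x + y * Y w <= x' + y' * Y w) ->
  G x y <= G x' y'.
Proof.
move=> H; apply: le_Rintegral => //; try exact: intU.
by move=> w _; apply: Ule.
Qed.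

Lemma G_gt x y c : 0 < c -> G x y < G (x + c) y.
Proof.
move=> c0; rewrite -subr_gt0 /G -RintegralB //; try exact: intU.
apply: pos_integral; first by apply: intB; exact: intU.
move=> w; rewrite subr_gt0; apply: Uinc; lra.
Qed.

Lemma intD f g : intR f -> intR g -> intR (fun w => f w + g w).
Proof.
move=> hf hg; apply: eq_integrable (integrableD measurableT hf hg) => //.
Qed.

Lemma G_conc y : concave_fun (fun x => G x y).
Proof.
move=> x x' t t01 /=.
rewrite /G -!RintegralZl //; try exact: intU.
rewrite -RintegralD //; try (apply: intZ; exact: intU).
apply: le_Rintegral => //.
- by apply: intD; apply: intZ; exact: intU.
- exact: intU.
move=> w _.
have := Uc (x + y * Y w) (x' + y * Y w) t t01.
by rewrite (_ : t * (x + y * Y w) + (1 - t) * (x' + y * Y w) = t * x + (1 - t) * x' + y * Y w) //; ring.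
Qed.
Lemma contat_lin (psi : R -> R) a b s : concave_fun psi ->
  contat (fun p => psi (a + b * p)) s.
Proof.
move=> Hc e e0.
set u := a + b * s.
set C := `|psi (u + 1) - psi u| + `|psi u - psi (u - 1)|.
have C0 : 0 <= C by rewrite /C addr_ge0.
have B0 : 0 <= `|b| by [].
set K := `|b| * C + `|b| + 1.
have BC0 : 0 <= `|b| * C by rewrite mulr_ge0.
have K0 : 0 < K by rewrite /K; lra.
exists (Num.min (K^-1) (e / K)); first by rewrite lt_min invr_gt0 K0 divr_gt0.
move=> q; rewrite lt_min => /andP[h1 h2].
rewrite ltr_pdivlMr // in h2.
have h1' : `|q - s| * K < 1.
  by move: h1; rewrite -[K^-1]div1r ltr_pdivlMr.
have n0 : 0 <= `|q - s| by [].
have -> : a + b * q = u + b * (q - s) by rewrite /u; ring.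
have hh : `|b * (q - s)| <= 1.
  rewrite normrM; have : `|b| * `|q - s| <= K * `|q - s|.
    by apply: ler_wpM2r => //; rewrite /K; lra.
  lra.
apply: (le_lt_trans (conc_lip psi u (b * (q - s)) Hc hh)).
rewrite normrM -/C.
have : `|b| * `|q - s| * C <= K * `|q - s|.
  have -> : `|b| * `|q - s| * C = (`|b| * C) * `|q - s| by ring.
  by apply: ler_wpM2r => //; rewrite /K; lra.
lra.
Qed.
Lemma pS_case x0 y0 D : 0 < D ->
  G (x0 - D * pS P U Y x0 y0 D) (y0 + D) = G x0 y0.
Proof.
move=> D0.
have E p : 'E_P[fun w => U (x0 + y0 * Y w + D * (Y w - p))]%E
    = (G (x0 + - D * p) (y0 + D))%:E.
  rewrite -EU_G /EU; congr expectation; apply/funext => w; congr U; ring.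
rewrite /pS.
set phi := fun p => G (x0 + - D * p) (y0 + D).
have -> : [set p | 0 <= p /\ (EU P U Y x0 y0 <=
    'E_P[fun w => U (x0 + y0 * Y w + D * (Y w - p))])%E]
    = [set p | 0 <= p /\ G x0 y0 <= phi p].
  by apply/funext => p; rewrite /= E EU_G lee_fin.
have S0 : (0:R) <= 0 /\ G x0 y0 <= phi 0.
  split => //; apply: G_le => w; rewrite mulr0 addr0.
  have := mulr_ge0 (ltW D0) (Y0 w); lra.
set del := G x0 (y0 + D) - G (x0 - 1) (y0 + D).
have del0 : 0 < del.
  by rewrite /del subr_gt0; have := G_gt (x0 - 1) (y0 + D) 1 ltr01; rewrite subrK.
have Dd : 0 < D * del by rewrite mulr_gt0.
have G0le : G x0 y0 <= G x0 (y0 + D).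
  by move: S0 => [_]; rewrite /phi mulr0 addr0.
set M := D^-1 + (G x0 (y0 + D) - G x0 y0) / (D * del).
have UB : ubound [set p | 0 <= p /\ G x0 y0 <= phi p] M.
  move=> p [p0 hp].
  have M1 : 0 <= (G x0 (y0 + D) - G x0 y0) / (D * del).
    by rewrite divr_ge0 // ?subr_ge0 // ltW.
  have [Dp|Dp] := ltP (D * p) 1.
    have : p < D^-1 by rewrite -[D^-1]div1r ltr_pdivlMr // mulrC.
    rewrite /M; lra.
  have := conc_far (fun u => G u (y0 + D)) x0 (D * p) (G_conc (y0 + D)) Dp.
  rewrite /= -/del.
  move: hp; rewrite /phi mulNr => hp hf.
  have : p <= (G x0 (y0 + D) - G x0 y0) / (D * del).
    rewrite ler_pdivlMr //.
    have -> : p * (D * del) = D * p * del by ring.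
    lra.
  have : 0 <= D^-1 by rewrite invr_ge0 ltW.
  rewrite /M; lra.
have CT := contat_lin (fun u => G u (y0 + D)) x0 (- D)
  (sup [set p | 0 <= p /\ G x0 y0 <= phi p]) (G_conc (y0 + D)).
have := sup_eq phi (G x0 y0) M S0 UB CT.
by rewrite /phi mulNr.
Qed.
Lemma mU x y : measurable_fun setT (fun w => U (x + y * Y w)).
Proof. by have [/measurable_EFinP] := integrableP _ _ _ (Hint x y). Qed.

Lemma exists_pB x0 y0 D : 0 < D ->
  exists2 p1 : R, 0 <= p1 & G x0 y0 <= G (x0 + D * p1) (y0 - D).
Proof.
move=> D0.
pose a := fun w => U (x0 + (y0 - D) * Y w).
pose top := fun w => U ((x0 + D) + y0 * Y w).
pose wn := fun (n : nat) w => U ((x0 + D * n%:R) + (y0 - D) * Y w).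
pose g := fun (n : nat) w => ((Num.min (wn n w) (top w)) - a w)%:E.
have mg n : measurable_fun setT (g n).
  apply/measurable_EFinP; apply: measurable_funB; last exact: mU.
  by apply: measurable_minr; exact: mU.
have DY w : 0 <= D * Y w by rewrite mulr_ge0 // ltW.
have g0 n w : (0 <= g n w)%E.
  rewrite lee_fin subr_ge0 le_min; apply/andP; split; apply: Ule.
    have : 0 <= D * n%:R by rewrite mulr_ge0 // ltW.
    have := DY w; lra.
  have := DY w; lra.
have nd w : {homo (g^~ w) : m n / (m <= n)%N >-> (m <= n)%E}.
  move=> m n mn; rewrite lee_fin lerD2r le_min [X in _ && X]ge_min lexx orbT andbT ge_min.
  apply/orP; left; apply: Ule.
  have : D * m%:R <= D * n%:R by rewrite ler_pM2l // ler_nat.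
  lra.
have MC := monotone_convergence P measurableT mg (fun n w _ => g0 n w)
  (fun w _ => nd w).
have L w : limn (g^~ w) = (top w - a w)%:E.
  apply: lim_near_cst => //; exists (Num.truncn (Y w)).+2 => // n /= Nn.
  congr EFin; congr (_ - _); apply: min_r; apply: Ule.
  have h1 := truncnS_gt (Y w).
  have h2 : ((Num.truncn (Y w)).+2%:R <= n%:R :> R) by rewrite ler_nat.
  have h3 : ((Num.truncn (Y w)).+2%:R = (Num.truncn (Y w)).+1%:R + 1 :> R).
    by rewrite -natr1.
  have : D * (Y w + 1) <= D * n%:R.
    by rewrite ler_pM2l //; lra.
  lra.
have ia : intR a by exact: intU.
have it : intR top by exact: intU.
have Lint : (\int[P]_(x in setT) limn (g^~ x) =
    (G (x0 + D) y0 - G x0 (y0 - D))%:E)%E.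
  rewrite (eq_integral (fun w => (top w - a w)%:E)); last by move=> w _; rewrite L.
  rewrite /G -RintegralB // /Rintegral fineK //.
  exact: integrable_fin_num (intB _ _ it ia).
pose I := fun n => (\int[P]_(x in setT) g n x)%E.
have ndI : nondecreasing_seq I.
  move=> m n mn; apply: ge0_le_integral => // w _; exact: nd.
have limI : limn I = ereal_sup (range I).
  by apply: cvg_lim => //; exact: ereal_nondecreasing_cvgn.
rewrite Lint -/I limI in MC.
have Gt := G_gt x0 y0 D D0.
have : ((G x0 y0 - G x0 (y0 - D))%:E < ereal_sup (range I))%E.
  by rewrite -MC lte_fin; lra.
move=> /ereal_sup_gt [_ [n _ <-]] hn.
exists n%:R; first by [].
have : (I n <= (G (x0 + D * n%:R) (y0 - D) - G x0 (y0 - D))%:E)%E.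
  have iw : intR (wn n) by exact: intU.
  rewrite /G -RintegralB // /Rintegral fineK; last first.
    exact: integrable_fin_num (intB _ _ iw ia).
  apply: ge0_le_integral => //.
    by apply/measurable_EFinP; apply: measurable_funB; exact: mU.
  by move=> w _; rewrite lee_fin lerB // ge_min lexx.
move/(lt_le_trans hn); rewrite lte_fin; lra.
Qed.
Lemma pB_case x0 y0 D : 0 < D ->
  G (x0 + D * pB P U Y x0 y0 D) (y0 - D) = G x0 y0.
Proof.
move=> D0.
have E p : 'E_P[fun w => U (x0 + y0 * Y w + D * (p - Y w))]%E
    = (G (x0 + D * p) (y0 - D))%:E.
  rewrite -EU_G /EU; congr expectation; apply/funext => w; congr U; ring.
rewrite /pB.
set phi := fun p => G (x0 + D * p) (y0 - D).
have -> : [set p | 0 <= p /\ (EU P U Y x0 y0 <=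
    'E_P[fun w => U (x0 + y0 * Y w + D * (p - Y w))])%E]
    = [set p | 0 <= p /\ G x0 y0 <= phi p].
  by apply/funext => p; rewrite /= E EU_G lee_fin.
have [p1 p10 hp1] := exists_pB x0 y0 D D0.
have phi0 : phi 0 <= G x0 y0.
  apply: G_le => w; rewrite mulr0 addr0.
  have := mulr_ge0 (ltW D0) (Y0 w); lra.
have CT := contat_lin (fun u => G u (y0 - D)) x0 D
  (inf [set p | 0 <= p /\ G x0 y0 <= phi p]) (G_conc (y0 - D)).
exact: (inf_eq phi (G x0 y0) p1 (conj p10 hp1) phi0 CT).
Qed.
End Main.

Theorem theorem16 (R : realType) (d : measure_display) (T : measurableType d)
  (P : probability T R) (U : R -> R) (Y : T -> R) (x0 y0 : R) :
  concave_fun U ->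
  {homo U : a b / a < b} ->
  measurable_fun setT Y ->
  (forall w, 0 <= Y w) ->
  (forall x y : R, P.-integrable setT (fun w => (U (x + y * Y w))%:E)) ->
  forall xy : R * R, psi P U Y x0 y0 xy ->
    EU P U Y xy.1 xy.2 = EU P U Y x0 y0.
Proof.
move=> Uc Uinc _ Y0 Hint xy [[D [D0 ->]]|[D [D0 ->]]] /=.
  have [->|Dp] := eqVneq D 0; first by rewrite mul0r subr0 addr0.
  have D0' : 0 < D by rewrite lt_neqAle eq_sym Dp.
  by rewrite !(EU_G _ _ _ _ _ _ Hint) (pS_case _ _ _ _ _ _ Uc Uinc Y0 Hint _ _ _ D0').
have [->|Dp] := eqVneq D 0; first by rewrite mul0r addr0 subr0.
have D0' : 0 < D by rewrite lt_neqAle eq_sym Dp.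
by rewrite !(EU_G _ _ _ _ _ _ Hint) (pB_case _ _ _ _ _ _ Uc Uinc Y0 Hint _ _ _ D0').
Qed.
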